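(* Let $y\in\mathbb{R}^N$, let $H$ be a real $N\times p$ matrix ($N\le p$) with $\operatorname{rank}(H)=N$ and largest singular value equal to $1$, let $\gamma^2>0$, $\epsilon^2>0$, $\sigma^2>0$ be given constants, and let $p_{q}$ be the Markov tree prior probability mass function on $\{0,1\}^p$ described in the context. For $q=(q_1,\dots,q_p)\in\{0,1\}^p$ set $$D(q)=\operatorname{diag}\bigl((\gamma^2)^{q_1}(\epsilon^2)^{1-q_1},\dots,(\gamma^2)^{q_p}(\epsilon^2)^{1-q_p}\bigr).$$ Consider the EM iteration on $\theta=(q,s)\in\{0,1\}^p\times\mathbb{R}^p$, $j=0,1,2,\dots$: E step: $z^{(j)}=s^{(j)}+H^T(y-Hs^{(j)})$; M step: $\theta^{(j+1)}=(q^{(j+1)},s^{(j+1)})\in\arg\max_{(q,s)}\Bigl\{-\tfrac12\,\frac{\|z^{(j)}-s\|_2^2+s^TD(q)^{-1}s}{\sigma^2}+\ln p_{q}(q)+\tfrac12\ln\bigl(\tfrac{\epsilon^2}{\gamma^2}\bigr)\sum_{i=1}^p q_i\Bigr\}$. Then the signal and binary state variable estimates $s^{(+\infty)}$ and $q^{(+\infty)}$ obtained upon convergence of this iteration (i.e., at a fixed point of the E and M steps) satisfy $$s^{(+\infty)}=\bar s(q^{(+\infty)}),\qquad\text{where }\ \bar s(q)=D(q)H^T\bigl[I_N+HD(q)H^T\bigr]^{-1}y .$$ Thus the iteration provides an estimate $q^{(+\infty)}$ of the state variables together with the solution $\bar s(q^{(+\infty)})$ of the corresponding linear system as the signal esti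mate.
   Context: Setting: measurements $y=Hs+$ noise with likelihood $\mathcal N(y\mid Hs,\sigma^2 I_N)$; signal prior $s\mid q,\sigma^2\sim\mathcal N(0,\sigma^2 D(q))$, so $q_i=1$ (resp. $0$) marks large (resp. small) coefficients. The prior $p_q$: the indices $\{1,\dots,p\}$ correspond bijectively (via a fixed map $\upsilon$) to the positions $(i_1,i_2)$ of a $\rho\times\kappa$ array of two-dimensional wavelet coefficients with $L$ decomposition levels. The approximation set is $\mathcal A=\upsilon(\{1,\dots,\rho/2^L\}\times\{1,\dots,\kappa/2^L\})$, the root set is $\mathcal T_{\mathrm{root}}=\upsilon(\{1,\dots,\rho/2^{L-1}\}\times\{1,\dots,\kappa/2^{L-1}\})\setminus\mathcal A$, and the tree set is $\mathcal T=\{1,\dots,p\}\setminus\mathcal A$. The node at $(i_1,i_2)$ is the parent $\pi(\cdot)$ of the four nodes $(2i_1-1,2i_2-1),(2i_1-1,2i_2),(2i_1,2i_2-1),(2i_1,2i_2)$. Given constants $P_{\mathrm{root}},P_{\mathrm H},P_{\mathrm L}\in(0,1)$: $\Pr\{q_i=1\}=1$ for $i\in\mathcal A$; $\Pr\{q_i=1\}=P_{\mathrm{root}}$ independently for $i\in\mathcal T_{\mathrm{root}}$; and for $i\in\mathcal T\setminus\mathcal T_{\mathrm{root}}$, $\Pr\{q_i=1\mid q_{\pi(i)}\}=P_{\mathrm H}$ if $q_{\pi(i)}=1$ and $P_{\mathrm L}$ if $q_{\pi(i)}=0$ (Markov tree). $\|\cdot\|_2$ is the Euclidean norm. *)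

(* Defs.v *)
From HB Require Import structures.
From mathcomp Require Import all_boot all_order all_algebra.
From mathcomp Require Import all_classical all_reals exp ereal.
Set Implicit Arguments. Unset Strict Implicit. Unset Printing Implicit Defensive.
Import Order.TTheory GRing.Theory Num.Theory.
Local Open Scope ring_scope.

Section Defs.
Variable R : realType.

Definition sqnorm n (v : 'cV[R]_n) : R := \sum_(i < n) (v i 0) ^+ 2.

Definition Dq p (g2 e2 : R) (q : {ffun 'I_p -> bool}) : 'M[R]_p :=
  diag_mx (\row_i ((g2 ^+ q i) * (e2 ^+ (1 - q i)))).

(* 0-based wavelet positions: the parent of (a,b) is (a/2, b/2)
   (1-based: parent of (2i-1,...),(2i,...) is i). *)
Definition half_ord n (a : 'I_n) : 'I_n :=
  Ordinal (leq_ltn_trans (leq_div a 2) (ltn_ord a)).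

Definition in_A rho kappa L (pos : 'I_rho * 'I_kappa) : bool :=
  (pos.1 < rho %/ 2 ^ L)%N && (pos.2 < kappa %/ 2 ^ L)%N.
Definition in_root rho kappa L (pos : 'I_rho * 'I_kappa) : bool :=
  [&& (pos.1 < rho %/ 2 ^ L.-1)%N, (pos.2 < kappa %/ 2 ^ L.-1)%N
      & ~~ in_A L pos].

Definition parent_idx p rho kappa (w : 'I_rho * 'I_kappa -> 'I_p)
  (ups : 'I_p -> 'I_rho * 'I_kappa) (i : 'I_p) : 'I_p :=
  w (half_ord (ups i).1, half_ord (ups i).2).

Definition bern (P : R) (b : bool) : R := if b then P else 1 - P.

Definition markov_tree_prior p rho kappa L
  (ups : 'I_p -> 'I_rho * 'I_kappa) (w : 'I_rho * 'I_kappa -> 'I_p)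
  (Proot PH PL : R) (q : {ffun 'I_p -> bool}) : R :=
  (\prod_(i < p | in_A L (ups i)) (if q i then 1 else 0)) *
  (\prod_(i < p | in_root L (ups i)) bern Proot (q i)) *
  (\prod_(i < p | ~~ in_A L (ups i) && ~~ in_root L (ups i))
     bern (if q (parent_idx w ups i) then PH else PL) (q i)).

Definition lnE (x : R) : \bar R := if x == 0 then -oo%E else (ln x)%:E.

Definition Mobj p (sigma2 g2 e2 : R) (prior : {ffun 'I_p -> bool} -> R)
  (z : 'cV[R]_p) (q : {ffun 'I_p -> bool}) (s : 'cV[R]_p) : \bar R :=
  ((- (1/2) * (sqnorm (z - s) + (s^T *m invmx (Dq g2 e2 q) *m s) 0 0) / sigma2
    + (1/2) * ln (e2 / g2) * \sum_(i < p) ((q i : nat)%:R))%:E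
   + lnE (prior q))%E.

Definition max_singular_value_one N p (H : 'M[R]_(N, p)) : Prop :=
  (forall x : 'cV[R]_p, sqnorm (H *m x) <= sqnorm x) /\
  (exists x : 'cV[R]_p, x != 0 /\ sqnorm (H *m x) = sqnorm x).

Definition sbar N p (g2 e2 : R) (H : 'M[R]_(N, p)) (y : 'cV[R]_N)
  (q : {ffun 'I_p -> bool}) : 'cV[R]_p :=
  Dq g2 e2 q *m H^T *m invmx (1%:M + H *m Dq g2 e2 q *m H^T) *m y.

End Defs.

(* Main.v *)
Require Import Defs.
From HB Require Import structures.
From mathcomp Require Import all_boot all_order all_algebra.
From mathcomp Require Import all_classical all_reals exp ereal.
From mathcomp Require Import ring lra.
Import Order.TTheory GRing.Theory Num.Theory.
Local Open Scope ring_scope.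

Section H.
Variable R : realType.

Lemma quad_diag n (w : 'rV[R]_n) (e : 'rV[R]_n) :
  (w *m diag_mx e *m w^T) 0 0 = \sum_k e 0 k * (w 0 k) ^+ 2.
Proof.
rewrite mul_mx_diag mxE; apply: eq_bigr => k _; rewrite mxE [w^T _ _]mxE; ring.
Qed.

Lemma inv_diag n (e : 'rV[R]_n) : (forall k, e 0 k != 0) ->
  invmx (diag_mx e) = diag_mx (\row_k (e 0 k)^-1).
Proof.
move=> ne.
pose E := diag_mx (\row_k (e 0 k)^-1).
have DE : diag_mx e *m E = 1%:M.
  rewrite mulmx_diag; apply/matrixP => i j; rewrite !mxE.
  by case: eqP => // _; rewrite mulfV.
have ED : E *m diag_mx e = 1%:M by rewrite diag_mxC.
have U : diag_mx e \in unitmx.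
  rewrite -row_free_unit; apply: inj_row_free => v hv.
  by rewrite -[v]mulmx1 -DE mulmxA hv mul0mx.
by rewrite -[invmx _]mulmx1 -DE mulmxA mulVmx // mul1mx.
Qed.


Lemma dv_pos (g2 e2 : R) p (q : {ffun 'I_p -> bool}) k : 0 < g2 -> 0 < e2 ->
  0 < (\row_i (g2 ^+ q i * e2 ^+ (1 - q i))) 0 k.
Proof. by move=> g0 e0; rewrite mxE; case: (q k); rewrite /= ?expr0 ?expr1 ?mul1r ?mulr1. Qed.

Lemma quadD p (g2 e2 : R) (q : {ffun 'I_p -> bool}) (s : 'cV[R]_p) : 0 < g2 -> 0 < e2 ->
  (s^T *m invmx (Dq g2 e2 q) *m s) 0 0 =
  \sum_k ((\row_i (g2 ^+ q i * e2 ^+ (1 - q i))) 0 k)^-1 * (s k 0) ^+ 2.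
Proof.
move=> g0 e0; rewrite /Dq inv_diag; last by move=> k; rewrite gt_eqF // dv_pos.
have := @quad_diag _ (s^T) (\row_k ((\row_i (g2 ^+ q i * e2 ^+ (1 - q i))) 0 k)^-1).
rewrite trmxK => ->; apply: eq_bigr => k _; rewrite [in LHS]mxE [s^T _ _]mxE //.
Qed.

End H.

Theorem theorem1 (R : realType) (N p rho kappa L : nat)
  (ups : 'I_p -> 'I_rho * 'I_kappa) (w : 'I_rho * 'I_kappa -> 'I_p)
  (Proot PH PL g2 e2 sigma2 : R)
  (H : 'M[R]_(N, p)) (y : 'cV[R]_N)
  (qinf : {ffun 'I_p -> bool}) (sinf : 'cV[R]_p) :
  cancel ups w -> cancel w ups ->
  (0 < L)%N -> (2 ^ L %| rho)%N -> (2 ^ L %| kappa)%N ->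
  0 < Proot < 1 -> 0 < PH < 1 -> 0 < PL < 1 ->
  (N <= p)%N -> \rank H = N -> max_singular_value_one H ->
  0 < g2 -> 0 < e2 -> 0 < sigma2 ->
  let z := sinf + H^T *m (y - H *m sinf) in
  (forall (q : {ffun 'I_p -> bool}) (s : 'cV[R]_p),
     (Mobj sigma2 g2 e2 (markov_tree_prior L ups w Proot PH PL) z q s
      <= Mobj sigma2 g2 e2 (markov_tree_prior L ups w Proot PH PL) z qinf sinf)%E) ->
  sinf = sbar g2 e2 H y qinf.
Proof.
move=> _ _ _ _ _ /andP[Pr0 _] /andP[PH0 _] _ _ _ _ g0 e0 s0 z Hmax.
set P := markov_tree_prior L ups w Proot PH PL.
have PT : 0 < P [ffun => true].
  rewrite /P /markov_tree_prior; apply: mulr_gt0; first apply: mulr_gt0.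
  - by apply: prodr_gt0 => i _; rewrite ffunE.
  - by apply: prodr_gt0 => i _; rewrite ffunE.
  - by apply: prodr_gt0 => i _; rewrite !ffunE.
have Pq : P qinf != 0.
  apply/negP => /eqP P0; have := Hmax [ffun => true] 0.
  rewrite /Mobj /lnE -/P P0 eqxx addeNy leeNy_eq (gt_eqF PT) -EFinD.
  by [].
set J := fun s : 'cV[R]_p => sqnorm (z - s) + (s^T *m invmx (Dq g2 e2 qinf) *m s) 0 0.
have HJ : forall s, J sinf <= J s.
  move=> s; have := Hmax qinf s; rewrite /Mobj /lnE (negbTE Pq) -!EFinD lee_fin.
  rewrite !lerD2r !mulNr lerN2 ler_pM2r ?invr_gt0 // ler_pM2l //.
pose dv := \row_i (g2 ^+ qinf i * e2 ^+ (1 - qinf i)).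
have dp : forall k, 0 < dv 0 k by move=> k; apply: dv_pos.
have Jd : forall s, J s = \sum_k ((z k 0 - s k 0) ^+ 2 + (dv 0 k)^-1 * (s k 0) ^+ 2).
  move=> s; rewrite /J quadD // /sqnorm -big_split; apply: eq_bigr => k _.
  by rewrite !mxE.
pose sst := \col_k (z k 0 * dv 0 k / (1 + dv 0 k)).
have key : \sum_k (1 + (dv 0 k)^-1) * (sinf k 0 - sst k 0) ^+ 2 = J sinf - J sst.
  rewrite !Jd -sumrB; apply: eq_bigr => k _.
  have -> : sst k 0 = z k 0 * dv 0 k / (1 + dv 0 k) by rewrite mxE.
  have := dp k; move: (dv 0 k) (z k 0) (sinf k 0) => d a b d0.
  field; rewrite gt_eqF //; lra.
have eqk : forall k, sinf k 0 = sst k 0.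
  move=> k.
  have := @psumr_eq0P _ _ xpredT (fun k => (1 + (dv 0 k)^-1) * (sinf k 0 - sst k 0) ^+ 2).
  move=> /(_ _ _ k isT).
  have h1 : forall k, 0 <= (1 + (dv 0 k)^-1) * (sinf k 0 - sst k 0) ^+ 2.
    move=> j; apply: mulr_ge0; last exact: sqr_ge0.
    by apply: addr_ge0 => //; rewrite invr_ge0 ltW.
  move=> /(_ (fun j _ => h1 j)).
  have -> : \sum_k (1 + (dv 0 k)^-1) * (sinf k 0 - sst k 0) ^+ 2 = 0.
    apply/eqP; rewrite eq_le; apply/andP; split; last exact: sumr_ge0 => j _.
    by rewrite key subr_le0 HJ.
  move=> /(_ erefl) /eqP; rewrite mulf_eq0 sqrf_eq0 subr_eq0 => /orP[|/eqP //].
  by rewrite gt_eqF // ltr_wpDr ?invr_ge0 ?ltW.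
have su : sinf = Dq g2 e2 qinf *m (H^T *m (y - H *m sinf)).
  apply/matrixP => i j; rewrite ord1 /Dq -/dv mul_diag_mx [in RHS]mxE.
  have zE : z i 0 = sinf i 0 + (H^T *m (y - H *m sinf)) i 0 by rewrite /z [in LHS]mxE.
  have := eqk i; rewrite [sst i 0]mxE zE.
  move: (dv 0 i) (dp i) (sinf i 0) ((H^T *m (y - H *m sinf)) i 0) => d d0 a b E.
  have : a * (1 + d) = (a + b) * d.
    rewrite {1}E; field; rewrite gt_eqF //; lra.
  rewrite mulrDr mulr1 mulrDl [a * d + _]addrC => /addIr ->; exact: mulrC.
pose M := 1%:M + H *m Dq g2 e2 qinf *m H^T.
have Mu : M *m (y - H *m sinf) = y.
  by rewrite /M mulmxDl mul1mx -!mulmxA -su subrK.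
have MU : M \in unitmx.
  rewrite -row_free_unit; apply: inj_row_free => v hv.
  have : (v *m M *m v^T) 0 0 = 0 by rewrite hv mul0mx mxE.
  rewrite /M mulmxDr mulmx1 mulmxDl mxE.
  have -> : v *m (H *m Dq g2 e2 qinf *m H^T) *m v^T = (v *m H) *m diag_mx dv *m (v *m H)^T.
    by rewrite trmx_mul !mulmxA.
  rewrite quad_diag.
  have -> : (v *m v^T) 0 0 = \sum_k (v 0 k) ^+ 2.
    by rewrite mxE; apply: eq_bigr => k _; rewrite [v^T _ _]mxE.
  have h1 : forall k, 0 <= v 0 k ^+ 2 by move=> k; exact: sqr_ge0.
  have h2 : 0 <= \sum_k dv 0 k * (v *m H) 0 k ^+ 2.
    by apply: sumr_ge0 => k _; apply: mulr_ge0; [exact: ltW | exact: sqr_ge0].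
  have h3 : 0 <= \sum_k v 0 k ^+ 2 by apply: sumr_ge0 => k _.
  move=> hs.
  have S0 : \sum_k v 0 k ^+ 2 = 0 by lra.
  apply/matrixP => i j; rewrite ord1 mxE.
  have := @psumr_eq0P _ _ xpredT (fun k => v 0 k ^+ 2) (fun k _ => h1 k) S0 j isT.
  by move/eqP; rewrite sqrf_eq0 => /eqP.
rewrite /sbar -/M -{1}Mu -!mulmxA mulKmx //.
Qed.
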